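(* For every positive integer $n$, $$\sum_{r=1}^{n-1}\frac{(-1)^rB_r}{r}\left(\frac{1}{n}\sum_{l=r}^{n}(-1)^l\binom{n}{l}H_{l-1}+\frac{1}{r(n-r)}\right)=\frac{H_{n-1}^{(2)}}{n}+\frac{H_{n-1}}{n^2}.$$
   Context: The Bernoulli numbers $B_n$ are defined by $\sum_{n=0}^\infty \frac{B_n}{n!}t^n=\frac{t}{e^t-1}$ (so $B_1=-\tfrac12$). For $m\ge 0$, $H_m=\sum_{k=1}^m \frac1k$ and $H_m^{(2)}=\sum_{k=1}^m\frac1{k^2}$ (empty sums are $0$, so $H_0=H_0^{(2)}=0$). *)

(* Defs.v *)
From mathcomp Require Import all_boot all_order all_algebra.
Set Implicit Arguments. Unset Strict Implicit. Unset Printing Implicit Defensive.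
Import Order.TTheory GRing.Theory Num.Theory.
Local Open Scope ring_scope.

(* Bernoulli numbers with B_1 = -1/2, i.e. the coefficients of t/(e^t - 1).
   Computed through the recurrence equivalent to the generating function:
   sum_{k=0}^{m} C(m+1,k) B_k = 0 for m >= 1, B_0 = 1.
   bern_list m = [:: B_0; ...; B_m]. *)
Fixpoint bern_list (m : nat) : seq rat :=
  match m with
  | 0%N => [:: 1]
  | m'.+1 =>
      let s := bern_list m' in
      rcons s (- ((m'.+2)%:R)^-1 *
               \sum_(k < m'.+1) ('C(m'.+2, k))%:R * nth 0 s k)
  end.

Definition bernoulli (n : nat) : rat := nth 0 (bern_list n) n.

Definition harm (m : nat) : rat := \sum_(1 <= k < m.+1) (k%:R)^-1.
Definition harm2 (m : nat) : rat := \sum_(1 <= k < m.+1) (k%:R ^+ 2)^-1.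

(* Main.v *)
Set Warnings "-notation-overridden,-ambiguous-paths".
Require Import Defs.
From mathcomp Require Import all_boot all_order all_algebra.
From mathcomp Require Import ring lra zify.
Set Warnings "-notation-overridden,-ambiguous-paths".
Import Order.TTheory GRing.Theory Num.Theory.
Local Open Scope ring_scope.
Lemma binmul M j k : (k <= j)%N -> (j <= M)%N ->
  ('C(M,j) * 'C(j,k) = 'C(M,k) * 'C(M-k, j-k))%N.
Proof.
move=> hkj hjM.
have hkM : (k <= M)%N by apply: leq_trans hjM.
apply/eqP; rewrite -(eqn_pmul2r (fact_gt0 k)) -(eqn_pmul2r (fact_gt0 (j-k))).
rewrite -(eqn_pmul2r (fact_gt0 (M-j))); apply/eqP.
transitivity (M`!).
  have e1 := bin_fact hkj. have e2 := bin_fact hjM.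
  rewrite -e2 -e1. ring.
have e1 := bin_fact hkM.
have e3 : (j - k <= M - k)%N by rewrite leq_sub2r.
have e2 := bin_fact e3.
have -> : (M - j = (M - k) - (j - k))%N by rewrite subnBA // subnK.
rewrite -e1 -e2. ring.
Qed.
Local Open Scope ring_scope.

Lemma altbin n : \sum_(0 <= i < n.+1) ('C(n,i))%:R * (-1)^+i = (n == 0%N)%:R :> rat.
Proof.
have := exprBn (1:rat) 1 n; rewrite subrr expr0n => ->.
rewrite big_mkord; apply: eq_bigr => i _.
by rewrite !expr1n !mulr1 mulr_natl.
Qed.

Lemma Gsum M k : \sum_(0 <= j < M.+1) ('C(M,j) * 'C(j,k))%:R * (-1)^+j
   = (-1)^+M * (M == k)%:R :> rat.
Proof.
case: (ltnP M k) => hMk.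
  rewrite big1_seq; last first.
    move=> j; rewrite mem_index_iota => /andP[_ hj].
    by rewrite (@bin_small j k) ?muln0 ?mul0r // (leq_trans hj).
  by rewrite (ltn_eqF hMk) mulr0.
rewrite (@big_cat_nat _ _ _ k) //=; last by rewrite ltnW.
rewrite big1_seq ?add0r; last first.
  move=> j; rewrite mem_index_iota => /andP[_ hj].
  by rewrite (@bin_small j k) ?muln0 ?mul0r.
rewrite -{1}(add0n k) big_addn.
have -> : (M.+1 - k = (M - k).+1)%N by rewrite subSn.
transitivity (('C(M,k))%:R * (-1)^+k *
   \sum_(0 <= i < (M - k).+1) ('C(M-k,i))%:R * (-1)^+i : rat).
  rewrite mulr_sumr; apply: eq_big_nat => i /andP[_ hi].
  rewrite binmul ?leq_addl ?addnK //; last by lia.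
  by rewrite natrM exprD; ring.
rewrite altbin subn_eq0.
case: eqP => [->|/eqP hne]; first by rewrite leqnn binn mul1r.
have -> : (M <= k)%N = false by apply/negbTE; rewrite -ltnNge ltn_neqAle eq_sym hne hMk.
by rewrite !mulr0.
Qed.
Lemma size_bern_list m : size (bern_list m) = m.+1.
Proof. by elim: m => //= m IH; rewrite size_rcons IH. Qed.

Lemma bern_list_nth m k : (k <= m)%N -> nth 0 (bern_list m) k = bernoulli k.
Proof.
elim: m => [|m IH]; first by rewrite leqn0 => /eqP ->.
rewrite leq_eqVlt => /orP[/eqP -> //|]; rewrite ltnS => hk.
by rewrite /= nth_rcons size_bern_list ltnS hk IH.
Qed.

Lemma bern_rec M : (1 < M)%N -> \sum_(k < M) ('C(M, k))%:R * bernoulli k = 0.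
Proof.
case: M => [//|[//|m]] _.
rewrite big_ord_recr /=.
have -> : bernoulli m.+1 = - ((m.+2)%:R)^-1 *
               \sum_(k < m.+1) ('C(m.+2, k))%:R * bernoulli k.
  rewrite /bernoulli /= nth_rcons size_bern_list ltnn eqxx.
  congr (_ * _); apply: eq_bigr => k _; rewrite bern_list_nth //.
  by rewrite -ltnS.
rewrite binSn mulrA mulrN mulfV ?pnatr_eq0 // mulN1r addrN //.
Qed.

Lemma sum_ind1 n (F : nat -> rat) :
  \sum_(0 <= k < n) F k * (k == 1%N)%:R = (1 < n)%:R * F 1%N.
Proof.
case: n => [|[|n]]; first by rewrite big_geq // mul0r.
  by rewrite big_nat1 mulr0 mul0r.
rewrite big_ltn // big_ltn // big1_seq ?addr0 /=; first by rewrite mulr0 add0r mulr1 mul1r.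
move=> k; rewrite mem_index_iota => /andP[hk _].
by rewrite (gtn_eqF hk) mulr0.
Qed.

Lemma ext_bin j a n (F : nat -> rat) : (a <= j.+1)%N -> (j.+1 <= n)%N ->
  \sum_(a <= k < n) ('C(j,k))%:R * F k = \sum_(a <= k < j.+1) ('C(j,k))%:R * F k.
Proof.
move=> h1 h2; rewrite (big_cat_nat h1 h2) /= [X in _ + X]big1_seq ?addr0 //.
move=> k /andP[_]; rewrite mem_index_iota => /andP[hk _].
by rewrite bin_small ?mul0r.
Qed.

Lemma b0 : bernoulli 0 = 1. Proof. by []. Qed.

Lemma sj j : \sum_(0 <= k < j) ('C(j,k))%:R * bernoulli k = (j == 1%N)%:R.
Proof.
case: j => [|[|j]]; first by rewrite big_geq.
  by rewrite big_nat1 b0 mulr1.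
by rewrite big_mkord bern_rec.
Qed.

Lemma U1 M : (0 < M)%N ->
  \sum_(0 <= k < M) ('C(M,k))%:R * (-1)^+k * bernoulli k = M%:R.
Proof.
move=> hM.
pose X := \sum_(0 <= j < M.+1) ('C(M,j))%:R * (-1)^+j *
     \sum_(0 <= k < j) ('C(j,k))%:R * bernoulli k.
have hXa : X = - M%:R.
  rewrite /X; under eq_bigr do rewrite sj.
  by rewrite sum_ind1 ltnS hM bin1 expr1 mul1r mulrN1.
have hXb : X = (-1)^+M * bernoulli M - \sum_(0 <= j < M.+1) ('C(M,j))%:R * (-1)^+j * bernoulli j.
  rewrite /X.
  transitivity (\sum_(0 <= j < M.+1) (('C(M,j))%:R * (-1)^+j *
      \sum_(0 <= k < M.+1) ('C(j,k))%:R * bernoulli k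
      - ('C(M,j))%:R * (-1)^+j * bernoulli j)).
    apply: eq_big_nat => j /andP[_ hj].
    rewrite (@ext_bin j 0 M.+1) // big_nat_recr //= binn mul1r; ring.
  rewrite sumrB; congr (_ - _).
  under eq_bigr do rewrite mulr_sumr.
  rewrite exchange_big_nat /=.
  transitivity (\sum_(0 <= k < M.+1) bernoulli k * ((-1)^+M * (M == k)%:R)).
    apply: eq_bigr => k _; rewrite -Gsum mulr_sumr; apply: eq_bigr => j _.
    rewrite natrM; ring.
  rewrite big_nat_recr //= eqxx big1_seq ?add0r; first by rewrite mulr1 mulrC.
  move=> k; rewrite mem_index_iota => /andP[_ hk].
  by rewrite (gtn_eqF hk) mulr0 mulr0.
move: hXa; rewrite hXb big_nat_recr //= binn mul1r.
move=> h; apply/eqP; rewrite -eqr_opp -h; apply/eqP; ring.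
Qed.

Lemma parity m : (-1)^+m * bernoulli m = bernoulli m + (m == 1%N)%:R.
Proof.
elim/ltn_ind: m => m IH.
pose d k := (-1)^+k * bernoulli k - bernoulli k - (k == 1%N)%:R.
suff h : d m = 0 by rewrite -[LHS]subr0 -h /d; ring.
have hs : \sum_(0 <= k < m.+1) ('C(m.+1,k))%:R * d k = 0.
  rewrite /d.
  transitivity (\sum_(0 <= k < m.+1) ('C(m.+1,k))%:R * (-1)^+k * bernoulli k
     - \sum_(0 <= k < m.+1) ('C(m.+1,k))%:R * bernoulli k
     - \sum_(0 <= k < m.+1) ('C(m.+1,k))%:R * (k == 1%N)%:R).
    rewrite -!sumrB; apply: eq_bigr => k _; ring.
  rewrite U1 // sj sum_ind1 bin1.
  case: m {IH d} => [|m]; first by rewrite /= mul0r !subrr.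
  by rewrite /= subr0 mul1r subrr.
move: hs; rewrite big_nat_recr //= big1_seq ?add0r; last first.
  move=> k; rewrite mem_index_iota => /andP[_ hk].
  by rewrite /d IH //; ring.
move/eqP; rewrite mulf_eq0 pnatr_eq0 => /orP[|/eqP //]; by rewrite eqn0Ngt bin_gt0 leqnSn.
Qed.

Definition u r := (-1)^+r * bernoulli r.

Lemma keyL m : \sum_(1 <= r < m.+1) ('C(m,r))%:R * bernoulli r = u m - 1.
Proof.
have := sj m; rewrite /u parity => h.
have : \sum_(0 <= r < m.+1) ('C(m,r))%:R * bernoulli r = bernoulli m + (m == 1%N)%:R.
  by rewrite big_nat_recr //= h binn mul1r addrC.
rewrite big_ltn // bin0 b0 mulr1 => h2.
by rewrite -h2; ring.
Qed.

Lemma harmS m : harm m.+1 = harm m + (m.+1%:R)^-1.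
Proof. by rewrite /harm big_nat_recr. Qed.

Lemma harm0 : harm 0 = 0.
Proof. by rewrite /harm big_geq. Qed.

Lemma hockey r N : (0 < r)%N ->
  \sum_(r <= j < N.+1) ('C(j,r))%:R / j%:R = ('C(N,r))%:R / r%:R :> rat.
Proof.
move=> hr; elim: N => [|N IH].
  case: r hr => // r _; rewrite big_geq // bin0n /= mul0r //.
case: (ltnP N.+1 r) => hNr.
  by rewrite big_geq // bin_small // mul0r.
rewrite big_nat_recr //= IH.
have e := mul_bin_down N.+1 r; rewrite /= in e.
have hr0 : (r%:R : rat) != 0 by rewrite pnatr_eq0 -lt0n.
have hN0 : (N.+1%:R : rat) != 0 by rewrite pnatr_eq0.
have e' : (N.+1%:R : rat) * ('C(N,r))%:R = (N.+1 - r)%:R * ('C(N.+1,r))%:R.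
  by rewrite -!natrM e.
rewrite natrB // in e'.
have eC : ('C(N,r))%:R = (N.+1%:R - r%:R) * ('C(N.+1,r))%:R / N.+1%:R :> rat.
  by rewrite -e' mulrC mulrA mulVf // mul1r.
rewrite eC; field; by rewrite hr0 /= -(natrD _ 1 N) pnatr_eq0.
Qed.

Definition T n r := \sum_(r <= l < n.+1) (-1)^+l * ('C(n,l))%:R * harm l.-1.
Definition S n r := \sum_(r <= j < n) ('C(j,r))%:R / (j%:R ^+ 2) : rat.

Lemma sumS n r : (0 < r)%N -> (r < n)%N ->
  r%:R * S n r + r.+1%:R * S n r.+1 = ('C(n.-1,r))%:R / r%:R.
Proof.
move=> hr hrn.
have -> : S n r.+1 = \sum_(r <= j < n) ('C(j,r.+1))%:R / (j%:R ^+ 2).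
  by rewrite [RHS]big_ltn // bin_small // mul0r add0r.
rewrite /S !mulr_sumr -big_split /=.
have -> : n = (n.-1).+1 by rewrite prednK // (leq_trans _ hrn).
rewrite -hockey //; apply: eq_big_nat => j /andP[hj _].
have e := mul_bin_left j r.
have ej : (r.+1%:R : rat) * ('C(j,r.+1))%:R = (j%:R - r%:R) * ('C(j,r))%:R.
  by rewrite -natrB // -!natrM e.
have hj0 : (j%:R : rat) != 0 by rewrite pnatr_eq0 -lt0n (leq_trans hr hj).
rewrite (mulrA r.+1%:R) ej; field; by [].
Qed.

Lemma nz1 m : (1 + (m%:R : rat)) != 0.
Proof. by rewrite -(natrD _ 1 m) pnatr_eq0. Qed.

Ltac nz := rewrite ?nz1 ?pnatr_eq0 -?lt0n; repeat (match goal with H : is_true (0 < ?x)%N |- context [(0 < ?x)%N] => rewrite H end); rewrite ?andbT //.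

Definition KR n r := (-1)^+r * r%:R *
   (('C(n,r))%:R * harm r.-1 / n%:R - S n r).

Lemma Kstep n r : (0 < r)%N -> (r < n)%N -> T n r.+1 = KR n r.+1 -> T n r = KR n r.
Proof.
move=> hr hrn IH.
rewrite /T big_ltn ?(leq_trans hrn) // -/(T n r.+1) IH /KR.
have hS := @sumS n r hr hrn.
have hS0 : S n r = (('C(n.-1,r))%:R / r%:R - r.+1%:R * S n r.+1) / r%:R.
  rewrite -hS; field; nz.
have e1 := mul_bin_left n r.
have e1' : ('C(n,r.+1))%:R = (n%:R - r%:R) * ('C(n,r))%:R / r.+1%:R :> rat.
  rewrite -natrB ?(ltnW hrn) // -natrM -e1 natrM; field; nz.
have e2 := mul_bin_down n r.
have hn : (0 < n)%N by apply: leq_trans hrn.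
have e2' : ('C(n.-1,r))%:R = (n%:R - r%:R) * ('C(n,r))%:R / n%:R :> rat.
  rewrite -natrB ?(ltnW hrn) // -natrM -e2 natrM; field; nz.
have hH : harm r = harm r.-1 + (r%:R)^-1.
  by case: r {hS hS0 e1 e1' e2 e2' hrn IH} hr => // r _; rewrite harmS.
rewrite /= hH hS0 e2' e1' exprS; field; nz.
Qed.

Lemma Klem n r : (0 < r)%N -> (r <= n)%N -> T n r = KR n r.
Proof.
move=> hr hrn.
have hn : (0 < n)%N by apply: leq_trans hrn.
suff H : forall i, (i < n)%N -> T n (n - i) = KR n (n - i).
  have := H (n - r)%N; rewrite subKn // => -> //.
  by rewrite -subn_gt0 subKn.
elim=> [|i IH] hi.
  rewrite subn0 /T /KR big_nat1 /S big_geq // binn subr0.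
  field; nz.
apply: (@Kstep n (n - i.+1)%N).
- by rewrite subn_gt0.
- by rewrite -subn_gt0 subKn ?(ltnW hi).
have -> : ((n - i.+1).+1 = n - i)%N by lia.
exact: IH (ltnW hi).
Qed.

Lemma low_ext a r n (F : nat -> rat) : (a <= r)%N ->
  \sum_(a <= j < n) ('C(j,r))%:R * F j = \sum_(r <= j < n) ('C(j,r))%:R * F j.
Proof.
move=> har; case: (leqP r n) => hrn.
  rewrite (big_cat_nat har hrn) /= big1_seq ?add0r //.
  move=> j /andP[_]; rewrite mem_index_iota => /andP[_ hj].
  by rewrite bin_small ?mul0r.
rewrite [RHS]big_geq ?(ltnW hrn) // big1_seq //.
move=> j /andP[_]; rewrite mem_index_iota => /andP[_ hj].
by rewrite bin_small ?mul0r // (leq_trans hj) // ltnW.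
Qed.

Lemma step2 n : \sum_(1 <= r < n) bernoulli r * S n r
   = \sum_(1 <= j < n) (u j - 1) / (j%:R ^+ 2).
Proof.
transitivity (\sum_(1 <= r < n) \sum_(1 <= j < n)
     bernoulli r * (('C(j,r))%:R / (j%:R ^+ 2))).
  apply: eq_big_nat => r /andP[hr _]; rewrite -mulr_sumr /S (@low_ext 1 r n) //.
rewrite exchange_big_nat /=; apply: eq_big_nat => j /andP[hj hjn].
rewrite -keyL -(@ext_bin j 1 n) // mulr_suml; apply: eq_bigr => r _.
ring.
Qed.

Lemma D0 n : \sum_(1 <= j < n.+1) ('C(n - j, 0))%:R / j%:R = harm n :> rat.
Proof. by rewrite /harm; apply: eq_bigr => j _; rewrite bin0 mul1r. Qed.

Lemma Dlem n r : \sum_(1 <= j < n.+1) ('C(n - j, r))%:R / j%:R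
   = ('C(n,r))%:R * (harm n - harm r) :> rat.
Proof.
elim: n r => [|n IH] r.
  by rewrite big_geq //; case: r => [|r]; rewrite ?bin0n ?harm0 ?subrr ?mulr0 ?mul0r.
case: r => [|r]; first by rewrite D0 bin0 harm0 subr0 mul1r.
rewrite big_nat_recr //= subnn bin0n mul0r addr0.
transitivity (\sum_(1 <= j < n.+1) ('C(n - j, r.+1))%:R / j%:R +
              \sum_(1 <= j < n.+1) ('C(n - j, r))%:R / j%:R : rat).
  rewrite -big_split; apply: eq_big_nat => j /andP[hj hjn] /=.
  rewrite subSn // binS natrD; ring.
rewrite !IH.
have e := mul_bin_diag n.+1 r.
have e' : ('C(n,r.+1))%:R = n.+1%:R * ('C(n,r))%:R / r.+1%:R - ('C(n,r))%:R :> rat.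
  have : (n.+1%:R * ('C(n,r))%:R : rat) = r.+1%:R * (('C(n,r.+1))%:R + ('C(n,r))%:R).
    by rewrite -natrD -binS -!natrM e.
  move=> h; rewrite h; field; nz.
rewrite !harmS binS natrD e'; field; nz.
Qed.

Lemma B3 n : \sum_(1 <= r < n.+1) ('C(n,r))%:R * bernoulli r * harm r.-1 =
  harm n * (u n - 1) - \sum_(1 <= j < n.+1) (u (n - j) - 1) / j%:R
   - \sum_(1 <= j < n.+1) (u j - 1) / j%:R.
Proof.
transitivity (\sum_(1 <= r < n.+1) (harm n * (('C(n,r))%:R * bernoulli r)
   - \sum_(1 <= j < n.+1) bernoulli r * (('C(n - j, r))%:R / j%:R)
   - \sum_(1 <= j < n.+1) bernoulli r * (('C(j, r))%:R / j%:R))).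
  apply: eq_big_nat => r /andP[hr hrn].
  rewrite -!mulr_sumr Dlem (@low_ext 1 r) // hockey //.
  have hH : harm r = harm r.-1 + (r%:R)^-1.
    by case: r {hrn} hr => // r _; rewrite harmS.
  rewrite hH; field; nz.
rewrite !sumrB -mulr_sumr keyL; congr (_ - _ - _).
  rewrite exchange_big_nat /=; apply: eq_big_nat => j /andP[hj hjn].
  rewrite -keyL -(@ext_bin (n - j) 1 n.+1 bernoulli) ?ltnS ?leq_subr // mulr_suml.
  by apply: eq_bigr => r _; ring.
rewrite exchange_big_nat /=; apply: eq_big_nat => j /andP[hj hjn].
rewrite -keyL -(@ext_bin j 1 n.+1 bernoulli) // mulr_suml.
by apply: eq_bigr => r _; ring.
Qed.

Lemma u0 : u 0 = 1. Proof. by rewrite /u expr0 mul1r b0. Qed.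

Lemma revsum n (G : nat -> rat) :
  \sum_(1 <= j < n.+1) G j = \sum_(0 <= i < n) G (n - i)%N.
Proof.
rewrite big_nat_rev /= big_add1 /=; apply: eq_big_nat => i /andP[_ hi].
by congr G; lia.
Qed.

Lemma B4 n : (1 < n)%N ->
  \sum_(1 <= r < n) ('C(n,r))%:R * bernoulli r * harm r.-1 =
  harm n.-1 - \sum_(1 <= r < n) (u r / r%:R + u r / (n - r)%:R).
Proof.
move=> hn.
have hB := B3 n.
rewrite big_nat_recr /= ?(ltnW hn) // binn mul1r in hB.
have hun : u n = bernoulli n.
  by rewrite /u parity (gtn_eqF hn) addr0.
have e1 : \sum_(1 <= j < n.+1) (u (n - j) - 1) / j%:R
    = 1 / n%:R + \sum_(1 <= i < n) u i / (n - i)%:R - harm n.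
  under eq_bigr do rewrite mulrBl.
  rewrite sumrB /harm; congr (_ - _).
    rewrite revsum big_ltn ?(ltnW hn) // !subn0 subnn u0; congr (_ + _).
    by apply: eq_big_nat => i /andP[_ hi]; rewrite subKn // ltnW.
  by apply: eq_bigr => j _; rewrite mul1r.
have e2 : \sum_(1 <= j < n.+1) (u j - 1) / j%:R
    = \sum_(1 <= i < n) u i / i%:R + u n / n%:R - harm n.
  under eq_bigr do rewrite mulrBl.
  rewrite sumrB /harm big_nat_recr ?(ltnW hn) //; congr (_ - _).
  by apply: eq_bigr => j _; rewrite mul1r.
have hH : harm n = harm n.-1 + (n%:R)^-1.
  by case: n hn {hB e1 e2 hun} => // n _; rewrite harmS.
rewrite e1 e2 hH -hun in hB.
rewrite big_split /=.
have hn0 : (0 < n)%N by apply: ltnW.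
apply/eqP; rewrite -(subr_eq0) ; apply/eqP.
move: hB; move: (\sum_(1 <= i < n) u i / (n - i)%:R) (\sum_(1 <= i < n) u i / i%:R).
move=> X1 X2 hB.
rewrite (_ : \sum_(1 <= i < n) ('C(n, i))%:R * bernoulli i * harm i.-1 =
   (harm n.-1 + (n%:R)^-1) * (u n - 1) - (1 / n%:R + X1 - (harm n.-1 + (n%:R)^-1)) -
      (X2 + u n / n%:R - (harm n.-1 + (n%:R)^-1)) - u n * harm n.-1); last first.
  by rewrite -hB; ring.
field; nz.
Qed.

Lemma ub r : u r * (-1)^+r = bernoulli r.
Proof.
by rewrite /u mulrC mulrA -exprD addnn -mul2n exprM sqrrN !expr1n mul1r.
Qed.

Lemma main2 n : (1 < n)%N ->
  \sum_(1 <= r < n)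
     ((-1) ^+ r * bernoulli r / r%:R) *
     ((n%:R)^-1 * \sum_(r <= l < n.+1)
                    (-1) ^+ l * ('C(n, l))%:R * harm l.-1
      + (r%:R * (n - r)%:R)^-1)
  = harm2 n.-1 / n%:R + harm n.-1 / (n%:R ^+ 2).
Proof.
move=> hn; have hn0 : (0 < n)%N by apply: ltnW.
transitivity (\sum_(1 <= r < n)
   ((n%:R ^+ 2)^-1 * (('C(n,r))%:R * (u r * (-1)^+r) * harm r.-1)
    - (n%:R)^-1 * ((u r * (-1)^+r) * S n r)
    + (n%:R)^-1 * (u r / (r%:R ^+ 2))
    + (n%:R ^+ 2)^-1 * (u r / r%:R + u r / (n - r)%:R))).
  apply: eq_big_nat => r /andP[hr hrn].
  rewrite -/(T n r) (@Klem n r hr (ltnW hrn)) /KR -/(u r).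
  have hnr : (0 < n - r)%N by rewrite subn_gt0.
  rewrite natrB ?(ltnW hrn) //.
  have hnr' : (n%:R - r%:R : rat) != 0.
    by rewrite -natrB ?(ltnW hrn) // pnatr_eq0 -lt0n.
  field; rewrite hnr'; nz.
under eq_bigr do rewrite !ub.
rewrite !big_split /= sumrN -!mulr_sumr B4 // step2.
under [X in _ - _ * X]eq_bigr do rewrite mulrBl.
rewrite sumrB /harm2 prednK //.
have -> : \sum_(1 <= i < n) 1 / (i%:R ^+ 2) = \sum_(1 <= k < n) (k%:R ^+ 2)^-1 :> rat.
  by apply: eq_bigr => i _; rewrite mul1r.
field; nz.
Qed.

Theorem mainTheorem1 (n : nat) (hn : (0 < n)%N) :
  \sum_(1 <= r < n)
     ((-1) ^+ r * bernoulli r / r%:R) *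
     ((n%:R)^-1 * \sum_(r <= l < n.+1)
                    (-1) ^+ l * ('C(n, l))%:R * harm l.-1
      + (r%:R * (n - r)%:R)^-1)
  = harm2 n.-1 / n%:R + harm n.-1 / (n%:R ^+ 2).
Proof.
case: n hn => [//|[|n]] _; last exact: main2.
by rewrite big_geq // /harm2 /harm !big_geq // !mul0r addr0.
Qed.
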